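(* Consider the linear (ReLU-free) encoder-decoder network described in the context. Fix $\alpha>0$. (1) (No skipped connection.) Suppose that for all $l\in[\kappa]$, $$\tilde\Phi^l\Phi^{l\top}=\alpha I_{m_{l-1}},\qquad \Psi^l\tilde\Psi^{l\top}=\frac{1}{r\alpha}I_{rq_{l-1}}.$$ Then, with $B=E^1E^2\cdots E^\kappa\in\mathbb R^{d_0\times d_\kappa}$ and $\tilde B=D^1D^2\cdots D^\kappa\in\mathbb R^{d_0\times d_\kappa}$, with columns $b_i,\tilde b_i$, one has $\tilde BB^\top=I_{d_0}$, i.e. $x=\sum_i\langle b_i,x\rangle\tilde b_i$ for every $x\in\mathbb R^{d_0}$; moreover the linear network without skipped connections satisfies $F(x)=\tilde BB^\top x$. (2) (With skipped connections.) Suppose that for all $l\in[\kappa]$, $$\tilde\Phi^l\Phi^{l\top}=\alpha I_{m_{l-1}},\qquad \Psi^l\tilde\Psi^{l\top}=\frac{1}{r(\alpha+1)}I_{rq_{l-1}}.$$ Define the $d_0\times(d_\kappa+\sum_{l=1}^\kappa s_l)$ matrices $$B^{skp}=\big[\,E^1\cdots E^\kappa,\ E^1\cdots E^{\kappa-1}S^\kappa,\ \dots,\ E^1S^2,\ S^1\,\big],\qquad \tilde B^{skp}=\big[\,D^1\cdots D^\kappa,\ D^1\cdots D^{\kappa-1}\tilde S^\kappa,\ \dots,\ D^1\tilde S^2,\ \tilde S^1\,\big].$$ Then the linear network with skipped connections satisfies $F(x)=\tilde B^{skp}B^{skp\top}x$, and $\tilde B^{skp}B^{skp\top}=I_{d_0}$,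 i.e. $x=\sum_i\langle b_i,x\rangle\tilde b_i$ with $b_i,\tilde b_i$ the columns of $B^{skp},\tilde B^{skp}$.
   Context: Conventions. For $m\ge1$, vectors in $\mathbb R^m$ are indexed $0,\dots,m-1$ with indices taken modulo $m$. For $u,v\in\mathbb R^m$ the circular convolution is $(u\circledast v)[n]=\sum_{k=0}^{m-1}u[k]\,v[n-k]$; a vector of length $r\le m$ is identified with its zero-padding to length $m$ when convolved with length-$m$ vectors. For a matrix $A=[a_1\cdots a_p]\in\mathbb R^{m\times p}$ and $\psi\in\mathbb R^r$, $A\circledast\psi:=[a_1\circledast\psi\ \cdots\ a_p\circledast\psi]\in\mathbb R^{m\times p}$. $[n]=\{1,\dots,n\}$. Architecture. Fix depth $\kappa\ge1$, channel numbers $q_0,\dots,q_\kappa$, channel lengths $m_0,\dots,m_\kappa$ and a filter length $r$ with $r\le m_l$ for all $l$; set $d_l=m_lq_l$ and $s_l=m_{l-1}q_l$. For each $l\in[\kappa]$ there are encoder filters $\psi^l_{j,k}\in\mathbb R^r$ ($j\in[q_l]$, $k\in[q_{l-1}]$), a pooling matrix $\Phi^l\in\mathbb R^{m_{l-1}\times m_l}$, decoder filters $\tilde\psi^l_{j,k}\in\mathbb R^r$ ($j\in[q_{l-1}]$, $k\in[q_l]$) and an unpooling matrix $\tilde\Phi^l\in\mathbb R^{m_{l-1}\times m_l}$. Define block matrices: $E^l\in\mathbb R^{d_{l-1}\times d_l}$ with $(k,j)$ block ($k\in[q_{l-1}],j\in[q_l]$) equal to $\Phi^l\circledast\psi^l_{j,k}$;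 $D^l\in\mathbb R^{d_{l-1}\times d_l}$ with $(j,k)$ block ($j\in[q_{l-1}],k\in[q_l]$) equal to $\tilde\Phi^l\circledast\tilde\psi^l_{j,k}$; $S^l\in\mathbb R^{d_{l-1}\times s_l}$ with $(k,j)$ block $I_{m_{l-1}}\circledast\psi^l_{j,k}$; $\tilde S^l\in\mathbb R^{d_{l-1}\times s_l}$ with $(j,k)$ block $I_{m_{l-1}}\circledast\tilde\psi^l_{j,k}$. Filter matrices: $\Psi^l\in\mathbb R^{rq_{l-1}\times q_l}$ whose $(k,j)$ block (an $r\times1$ column) is $\psi^l_{j,k}$, and $\tilde\Psi^l\in\mathbb R^{rq_{l-1}\times q_l}$ whose $(j,k)$ block is $\tilde\psi^l_{j,k}$. Linear network (no ReLU). Without skipped connections: $\xi^0=x\in\mathbb R^{d_0}$, $\xi^l=E^{l\top}\xi^{l-1}$ ($l\in[\kappa]$), $\tilde\xi^\kappa=\xi^\kappa$, $\tilde\xi^{l-1}=D^l\tilde\xi^l$, $F(x)=\tilde\xi^0$. With skipped connections: additionally $\chi^l=S^{l\top}\xi^{l-1}$ and the decoder is $\tilde\xi^{l-1}=D^l\tilde\xi^l+\tilde S^l\chi^l$, $F(x)=\tilde\xi^0$. *)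

(* Defs.v *)
From HB Require Import structures.
From mathcomp Require Import all_boot all_order all_algebra.
Unset Printing Implicit Defensive.
Import Order.TTheory GRing.Theory Num.Theory.
Local Open Scope ring_scope.

(* Entry [i] of a vector v of length m, with index taken as a natural
   number; out-of-range indices give 0 (this is exactly zero-padding). *)
Definition vget (R : pzRingType) (m : nat) (v : 'cV[R]_m) (i : nat) : R :=
  if (insub i : option 'I_m) is Some t then v t 0 else 0.

Definition zpad (R : pzRingType) (m r : nat) (psi : 'cV[R]_r) : 'cV[R]_m :=
  \col_(i < m) @vget _ _ psi i.

Definition cconv (R : pzRingType) (m : nat) (u v : 'cV[R]_m) : 'cV[R]_m :=
  \col_(n < m) \sum_(k < m) u k 0 * @vget _ _ v ((n + m - k) %% m).

Definition mxconv (R : pzRingType) (m p r : nat) (A : 'M[R]_(m, p))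
  (psi : 'cV[R]_r) : 'M[R]_(m, p) :=
  \matrix_(i < m, j < p) @cconv _ _ (col j A) (@zpad _ m _ psi) i 0.

(* d_l = m_l q_l, realised as the block dimension sum_{k < q_l} m_l *)
Definition dimL (q m : nat -> nat) (l : nat) : nat := (\sum_(k < q l) m l)%N.
Definition sdimL (q m : nat -> nat) (l : nat) : nat := (\sum_(j < q l) m l.-1)%N.

Definition Emx (R : pzRingType) (r : nat) (q m : nat -> nat)
  (Phi : forall l, 'M[R]_(m l.-1, m l))
  (psi : forall l, 'I_(q l) -> 'I_(q l.-1) -> 'cV[R]_r) (l : nat)
  : 'M[R]_(dimL q m l.-1, dimL q m l) :=
  \mxblock_(k < q l.-1, j < q l) @mxconv _ _ _ _ (Phi l) (psi l j k).

Definition Dmx (R : pzRingType) (r : nat) (q m : nat -> nat)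
  (tPhi : forall l, 'M[R]_(m l.-1, m l))
  (tpsi : forall l, 'I_(q l.-1) -> 'I_(q l) -> 'cV[R]_r) (l : nat)
  : 'M[R]_(dimL q m l.-1, dimL q m l) :=
  \mxblock_(j < q l.-1, k < q l) @mxconv _ _ _ _ (tPhi l) (tpsi l j k).

Definition Smx (R : pzRingType) (r : nat) (q m : nat -> nat)
  (psi : forall l, 'I_(q l) -> 'I_(q l.-1) -> 'cV[R]_r) (l : nat)
  : 'M[R]_(dimL q m l.-1, sdimL q m l) :=
  \mxblock_(k < q l.-1, j < q l) @mxconv _ _ _ _ (1%:M : 'M[R]_(m l.-1)) (psi l j k).

Definition tSmx (R : pzRingType) (r : nat) (q m : nat -> nat)
  (tpsi : forall l, 'I_(q l.-1) -> 'I_(q l) -> 'cV[R]_r) (l : nat)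
  : 'M[R]_(dimL q m l.-1, sdimL q m l) :=
  \mxblock_(j < q l.-1, k < q l) @mxconv _ _ _ _ (1%:M : 'M[R]_(m l.-1)) (tpsi l j k).

Definition Psimx (R : pzRingType) (r : nat) (q : nat -> nat)
  (psi : forall l, 'I_(q l) -> 'I_(q l.-1) -> 'cV[R]_r) (l : nat)
  : 'M[R]_(\sum_(k < q l.-1) r, \sum_(j < q l) 1) :=
  \mxblock_(k < q l.-1, j < q l) psi l j k.

Definition tPsimx (R : pzRingType) (r : nat) (q : nat -> nat)
  (tpsi : forall l, 'I_(q l.-1) -> 'I_(q l) -> 'cV[R]_r) (l : nat)
  : 'M[R]_(\sum_(j < q l.-1) r, \sum_(k < q l) 1) :=
  \mxblock_(j < q l.-1, k < q l) tpsi l j k.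

Fixpoint chain (R : pzRingType) (q m : nat -> nat)
  (M : forall l, 'M[R]_(dimL q m l.-1, dimL q m l)) (n : nat)
  : 'M[R]_(dimL q m 0, dimL q m n) :=
  match n return 'M[R]_(dimL q m 0, dimL q m n) with
  | 0 => 1%:M
  | n'.+1 => @chain _ _ _ M n' *m M n'.+1
  end.

Fixpoint ssum (q m : nat -> nat) (n : nat) : nat :=
  match n with 0 => 0%N | n'.+1 => (sdimL q m n'.+1 + ssum q m n')%N end.

Fixpoint skiptail (R : pzRingType) (q m : nat -> nat)
  (M : forall l, 'M[R]_(dimL q m l.-1, dimL q m l))
  (S : forall l, 'M[R]_(dimL q m l.-1, sdimL q m l)) (n : nat)
  : 'M[R]_(dimL q m 0, ssum q m n) :=
  match n return 'M[R]_(dimL q m 0, ssum q m n) with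
  | 0 => 0
  | n'.+1 => row_mx (@chain _ _ _ M n' *m S n'.+1) (@skiptail _ _ _ M S n')
  end.

Definition skipmx (R : pzRingType) (q m : nat -> nat)
  (M : forall l, 'M[R]_(dimL q m l.-1, dimL q m l))
  (S : forall l, 'M[R]_(dimL q m l.-1, sdimL q m l)) (kappa : nat)
  : 'M[R]_(dimL q m 0, dimL q m kappa + ssum q m kappa) :=
  row_mx (@chain _ _ _ M kappa) (@skiptail _ _ _ M S kappa).

Fixpoint enc (R : pzRingType) (q m : nat -> nat)
  (E : forall l, 'M[R]_(dimL q m l.-1, dimL q m l)) (x : 'cV[R]_(dimL q m 0))
  (n : nat) : 'cV[R]_(dimL q m n) :=
  match n return 'cV[R]_(dimL q m n) with
  | 0 => x
  | n'.+1 => (E n'.+1)^T *m @enc _ _ _ E x n'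
  end.

Fixpoint dec (R : pzRingType) (q m : nat -> nat)
  (D : forall l, 'M[R]_(dimL q m l.-1, dimL q m l)) (n : nat)
  : 'cV[R]_(dimL q m n) -> 'cV[R]_(dimL q m 0) :=
  match n return 'cV[R]_(dimL q m n) -> 'cV[R]_(dimL q m 0) with
  | 0 => fun v => v
  | n'.+1 => fun v => @dec _ _ _ D n' (D n'.+1 *m v)
  end.

Fixpoint decskp (R : pzRingType) (q m : nat -> nat)
  (E D : forall l, 'M[R]_(dimL q m l.-1, dimL q m l))
  (S tS : forall l, 'M[R]_(dimL q m l.-1, sdimL q m l))
  (x : 'cV[R]_(dimL q m 0)) (n : nat)
  : 'cV[R]_(dimL q m n) -> 'cV[R]_(dimL q m 0) :=
  match n return 'cV[R]_(dimL q m n) -> 'cV[R]_(dimL q m 0) with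
  | 0 => fun v => v
  | n'.+1 => fun v =>
      @decskp _ _ _ E D S tS x n' (D n'.+1 *m v + tS n'.+1 *m ((S n'.+1)^T *m @enc _ _ _ E x n'))
  end.

Definition Fnet (R : pzRingType) (q m : nat -> nat)
  (E D : forall l, 'M[R]_(dimL q m l.-1, dimL q m l)) (kappa : nat)
  (x : 'cV[R]_(dimL q m 0)) : 'cV[R]_(dimL q m 0) :=
  @dec _ _ _ D kappa (@enc _ _ _ E x kappa).

Definition Fskp (R : pzRingType) (q m : nat -> nat)
  (E D : forall l, 'M[R]_(dimL q m l.-1, dimL q m l))
  (S tS : forall l, 'M[R]_(dimL q m l.-1, sdimL q m l)) (kappa : nat)
  (x : 'cV[R]_(dimL q m 0)) : 'cV[R]_(dimL q m 0) :=
  @decskp _ _ _ E D S tS x kappa (@enc _ _ _ E x kappa).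

Arguments vget {R m}.
Arguments zpad {R} m {r}.
Arguments cconv {R m}.
Arguments mxconv {R m p r}.
Arguments Emx {R r q m}.
Arguments Dmx {R r q m}.
Arguments Smx {R r q} m.
Arguments tSmx {R r q} m.
Arguments Psimx {R r q}.
Arguments tPsimx {R r q}.
Arguments chain {R q m}.
Arguments skiptail {R q m}.
Arguments skipmx {R q m}.
Arguments enc {R q m}.
Arguments dec {R q m}.
Arguments decskp {R q m}.
Arguments Fnet {R q m}.
Arguments Fskp {R q m}.

(* Main.v *)
Require Import Defs.
From HB Require Import structures.
From mathcomp Require Import all_boot all_order all_algebra.
From mathcomp Require Import zify ring.
Import Order.TTheory GRing.Theory Num.Theory.
Local Open Scope ring_scope.

Section Aux.
Variable R : comPzRingType.

Lemma vgetE r (v : 'cV[R]_r) i (Hi : (i < r)%N) : vget v i = v (Ordinal Hi) 0.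
Proof. by rewrite /vget insubT. Qed.

Lemma vget_ge r (v : 'cV[R]_r) i : (r <= i)%N -> vget v i = 0.
Proof. by move=> H; rewrite /vget insubF // ltnNge H. Qed.

Definition circ m r (psi : 'cV[R]_r) : 'M[R]_m :=
  \matrix_(n < m, k < m) vget psi ((n + m - k) %% m).

Arguments circ m {r}.
Lemma mxconvE m p r (A : 'M[R]_(m, p)) (psi : 'cV[R]_r) :
  mxconv A psi = circ m psi *m A.
Proof.
apply/matrixP => i j; rewrite !mxE; apply: eq_bigr => k _.
have Hm : (0 < m)%N by apply: leq_ltn_trans (ltn_ord i).
rewrite !mxE mulrC; congr (_ * _).
by rewrite /vget insubT ?ltn_pmod //= => H; rewrite mxE.
Qed.

Lemma circ_inj m (n : 'I_m) :
  injective (fun t : 'I_m => (Ordinal (ltn_pmod (n + m - t) (leq_ltn_trans (leq0n _) (ltn_ord n))))).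
Proof.
move=> t t' [] /eqP H; apply/val_inj => /=.
have : (n + m - t) + (t + t') == (n + m - t') + (t + t') %[mod m] by rewrite eqn_modDr.
have -> : ((n + m - t) + (t + t') = (n + m) + t')%N by have := ltn_ord t; lia.
have -> : ((n + m - t') + (t + t') = (n + m) + t)%N by have := ltn_ord t'; lia.
by rewrite eqn_modDl !modn_small // => /eqP.
Qed.

Lemma circ_neq m (n n' t : 'I_m) : n != n' ->
  (((n + m - t) %% m)%N == ((n' + m - t) %% m)%N) = false.
Proof.
move=> Hn; apply/negbTE; apply: contra Hn => /eqP H.
have : (n + m - t) + t == (n' + m - t) + t %[mod m] by rewrite eqn_modDr H.
have -> : ((n + m - t) + t = n + m)%N by have := ltn_ord t; lia.
have -> : ((n' + m - t) + t = n' + m)%N by have := ltn_ord t; lia.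
rewrite eqn_modDr !modn_small // => /eqP E; exact/eqP/val_inj.
Qed.

Lemma count_circ m r (n : 'I_m) : (r <= m)%N ->
  \sum_(t < m) (((n + m - t) %% m < r)%N)%:R = r%:R :> R.
Proof.
move=> Hr.
rewrite -(@reindex_inj _ _ _ _ _ xpredT (fun u : 'I_m => ((u < r)%N)%:R) (circ_inj _ n)) /=.
have -> : \sum_(j < m) (((j : nat) < r)%N)%:R = \sum_(j < m | ((j : nat) < r)%N) (1 : R).
  by rewrite [RHS]big_mkcond; apply: eq_bigr => j _; case: ltnP.
by rewrite -(big_ord_widen _ (fun _ => 1 : R) Hr) sumr_const card_ord.
Qed.

Lemma key (mp mn qp qn r : nat) (Phi tPhi : 'M[R]_(mp, mn))
  (psi : 'I_qn -> 'I_qp -> 'cV[R]_r) (tpsi : 'I_qp -> 'I_qn -> 'cV[R]_r) (a c : R) :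
  (r <= mp)%N -> tPhi *m Phi^T = a%:M ->
  (\mxblock_(k < qp, j < qn) psi j k) *m (\mxblock_(j < qp, k < qn) tpsi j k)^T = c%:M ->
  (\mxblock_(j < qp, k < qn) mxconv tPhi (tpsi j k)) *m
     (\mxblock_(k < qp, j < qn) mxconv Phi (psi j k))^T = (a * c * r%:R)%:M.
Proof.
move=> Hr HP Hpsi.
have Hent : forall (j k' : 'I_qp) (i i' : nat),
   \sum_(k < qn) vget (tpsi j k) i * vget (psi k k') i' =
   ((j == k') && (i == i') && (i < r)%N)%:R * c.
  move=> j k' i i'.
  move: Hpsi; rewrite tr_mxblock mul_mxblock -(mxdiagZ (p_ := fun _ : 'I_qp => r)) /mxdiag.
  move=> /eq_mxblockP /(_ k' j) H.
  case: (ltnP i r) => Hi; last first.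
    by rewrite big1 ?andbF ?mul0r // => k _; rewrite (vget_ge _ _ _ Hi) mul0r.
  case: (ltnP i' r) => Hi'; last first.
    rewrite big1; last by move=> k _; rewrite (vget_ge _ _ _ Hi') mulr0.
    have -> : (i == i') = false by apply/eqP => E; move: Hi Hi'; rewrite E; lia.
    by rewrite andbF /= mul0r.
  have := congr1 (fun M : 'M[R]_r => M (Ordinal Hi') (Ordinal Hi)) H.
  rewrite summxE /= => E.
  rewrite andbT.
  have -> : \sum_(k < qn) vget (tpsi j k) i * vget (psi k k') i' =
     \sum_(k < qn) (psi k k' *m (tpsi j k)^T) (Ordinal Hi') (Ordinal Hi).
    apply: eq_bigr => k _.
    by rewrite !mxE big_ord1 !mxE (vgetE _ _ _ Hi) (vgetE _ _ _ Hi') mulrC.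
  rewrite E eq_sym; case: eqP => _ /=; last by rewrite mxE mul0r.
  rewrite conform_mx_id mxE mulr_natl.
  by rewrite -[Ordinal Hi' == _]/(i' == i) eq_sym.
rewrite tr_mxblock mul_mxblock -(mxdiagZ (p_ := fun _ : 'I_qp => mp)) /mxdiag.
apply/eq_mxblockP => j k'.
under eq_bigr => k _ do rewrite !mxconvE trmx_mul mulmxA -(mulmxA _ tPhi) HP mul_mx_scalar -scalemxAl.
apply/matrixP => n n'; rewrite summxE.
under eq_bigr => k _ do rewrite mxE mxE.
rewrite -mulr_sumr exchange_big /=.
under eq_bigr => t _ do (rewrite (eq_bigr (fun k => vget (tpsi j k) ((n + mp - t) %% mp)%N * vget (psi k k') ((n' + mp - t) %% mp)%N)); last by move=> k _; rewrite !mxE).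
under eq_bigr => t _ do rewrite Hent.
case: eqP => Hjk /=; last first.
  by rewrite mxE big1 ?mulr0 // => t _; rewrite mul0r.
rewrite conform_mx_id mxE.
case: (eqVneq n n') => [<-|Hn].
  rewrite (eq_bigr (fun t : 'I_mp => ((((n + mp - t) %% mp) < r)%N)%:R * c)); last by move=> t _; rewrite eqxx.
  by rewrite -mulr_suml count_circ // mulr1n [r%:R * c]mulrC mulrA.
rewrite big1 ?mulr0; last by move=> t _; rewrite circ_neq //= mul0r.
by rewrite mulr0n.
Qed.

Lemma scalar_mx_add n (x y : R) : (x%:M + y%:M : 'M[R]_n) = (x + y)%:M.
Proof. by apply/matrixP => i j; rewrite !mxE mulrnDl. Qed.

Lemma sum_cols d p (B tB : 'M[R]_(d, p)) (x : 'cV[R]_d) :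
  \sum_(i < p) ((col i B)^T *m x) 0 0 *: col i tB = tB *m B^T *m x.
Proof.
apply/matrixP => a b; rewrite (ord1 b) summxE -mulmxA mxE.
apply: eq_bigr => i _; rewrite !mxE mulrC; congr (_ * _).
by apply: eq_bigr => k _; rewrite !mxE.
Qed.

Section Chain.
Variables (q m : nat -> nat).
Variables (E D : forall l, 'M[R]_(dimL q m l.-1, dimL q m l)).
Variables (S tS : forall l, 'M[R]_(dimL q m l.-1, sdimL q m l)).

Lemma enc_chain x n : enc E x n = (chain E n)^T *m x.
Proof.
elim: n => [|n IH] /=; first by rewrite trmx1 mul1mx.
by rewrite IH trmx_mul mulmxA.
Qed.

Lemma dec_chain n v : dec D n v = chain D n *m v.
Proof. by elim: n v => [|n IH] v /=; [rewrite mul1mx | rewrite IH mulmxA]. Qed.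

Lemma chain_id n : (forall l, (0 < l <= n)%N -> D l *m (E l)^T = 1%:M) ->
  chain D n *m (chain E n)^T = 1%:M.
Proof.
elim: n => [|n IH] H /=; first by rewrite trmx1 mul1mx.
rewrite trmx_mul mulmxA -(mulmxA _ (D n.+1)) H; last by rewrite /= leqnn.
rewrite (mulmx1 (chain D n)) IH // => l /andP[l0 ln].
by apply: H; rewrite l0 (leq_trans ln).
Qed.

Definition skterm l : 'M[R]_(dimL q m 0) :=
  chain D l *m tS l.+1 *m (S l.+1)^T *m (chain E l)^T.

Lemma decskp_eq x n v : decskp E D S tS x n v = chain D n *m v + \sum_(l < n) skterm l *m x.
Proof.
elim: n v => [|n IH] v /=; first by rewrite big_ord0 addr0 mul1mx.
rewrite IH big_ord_recr /= enc_chain mulmxDr (mulmxA (chain D n) (D n.+1)) -addrA [X in _ + X]addrC /skterm !mulmxA.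
reflexivity.
Qed.

Lemma skip_prod n : skiptail D tS n *m (skiptail E S n)^T = \sum_(l < n) skterm l.
Proof.
elim: n => [|n IH] /=; first by rewrite mul0mx big_ord0.
by rewrite tr_row_mx mul_row_col IH big_ord_recr /= addrC !trmx_mul /skterm !mulmxA.
Qed.

Lemma skip_id n : (forall l, (0 < l <= n)%N -> D l *m (E l)^T + tS l *m (S l)^T = 1%:M) ->
  chain D n *m (chain E n)^T + \sum_(l < n) skterm l = 1%:M.
Proof.
elim: n => [|n IH] H /=; first by rewrite big_ord0 addr0 trmx1 mul1mx.
have Hs : chain D n *m D n.+1 *m (chain E n *m E n.+1)^T + skterm n = chain D n *m (chain E n)^T.
  transitivity (chain D n *m (D n.+1 *m (E n.+1)^T + tS n.+1 *m (S n.+1)^T) *m (chain E n)^T).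
    by rewrite mulmxDr mulmxDl /skterm trmx_mul !mulmxA.
  by rewrite H ?(mulmx1 (chain D n)) //= leqnn.
rewrite big_ord_recr /= addrCA Hs addrC IH // => l /andP[l0 ln].
by apply: H; rewrite l0 (leq_trans ln).
Qed.
End Chain.
End Aux.

Theorem proposition3 (R : realFieldType) (kappa r : nat) (q m : nat -> nat)
  (Phi : forall l, 'M[R]_(m l.-1, m l))
  (psi : forall l, 'I_(q l) -> 'I_(q l.-1) -> 'cV[R]_r)
  (tPhi : forall l, 'M[R]_(m l.-1, m l))
  (tpsi : forall l, 'I_(q l.-1) -> 'I_(q l) -> 'cV[R]_r)
  (alpha : R) :
  (0 < kappa)%N -> (0 < r)%N -> (forall l, (l <= kappa)%N -> (r <= m l)%N) ->
  0 < alpha ->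
  let E := Emx Phi psi in
  let D := Dmx tPhi tpsi in
  let S := Smx m psi in
  let tS := tSmx m tpsi in
  (* (1) no skipped connection *)
  ((forall l, (0 < l <= kappa)%N ->
      tPhi l *m (Phi l)^T = alpha%:M /\
      Psimx psi l *m (tPsimx tpsi l)^T = (r%:R * alpha)^-1%:M) ->
    let B := chain E kappa in
    let tB := chain D kappa in
    tB *m B^T = 1%:M /\
    (forall x : 'cV[R]_(dimL q m 0),
       x = \sum_(i < dimL q m kappa) ((col i B)^T *m x) 0 0 *: col i tB) /\
    (forall x : 'cV[R]_(dimL q m 0), Fnet E D kappa x = tB *m B^T *m x))
  /\
  (* (2) with skipped connections *)
  ((forall l, (0 < l <= kappa)%N ->
      tPhi l *m (Phi l)^T = alpha%:M /\
      Psimx psi l *m (tPsimx tpsi l)^T = (r%:R * (alpha + 1))^-1%:M) ->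
    let Bskp := skipmx E S kappa in
    let tBskp := skipmx D tS kappa in
    (forall x : 'cV[R]_(dimL q m 0),
       Fskp E D S tS kappa x = tBskp *m Bskp^T *m x) /\
    tBskp *m Bskp^T = 1%:M /\
    (forall x : 'cV[R]_(dimL q m 0),
       x = \sum_(i < dimL q m kappa + ssum q m kappa)
             ((col i Bskp)^T *m x) 0 0 *: col i tBskp)).
Proof.
move=> Hk Hr0 Hrm Ha E D S tS.
have Hrl : forall l, (0 < l <= kappa)%N -> (r <= m l.-1)%N.
  by move=> l /andP[_ Hl]; apply: Hrm; apply: leq_trans Hl; apply: leq_pred.
have Hr0' : r%:R != 0 :> R by rewrite pnatr_eq0 -lt0n.
have Ha0 : alpha != 0 by rewrite gt_eqF.
split.
  move=> H B tB.
  have HDE : forall l, (0 < l <= kappa)%N -> D l *m (E l)^T = 1%:M.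
    move=> l Hl; have [HP Hpsi] := H l Hl.
    have K := @key R _ _ _ _ _ (Phi l) (tPhi l) (psi l) (tpsi l) _ _ (Hrl l Hl) HP Hpsi.
    rewrite /D /E /Dmx /Emx K; congr (_%:M); field; by rewrite Ha0 Hr0'.
  have HBB : tB *m B^T = 1%:M by apply: chain_id.
  split; first exact: HBB.
  split; first by move=> x; rewrite sum_cols HBB mul1mx.
  by move=> x; rewrite /Fnet dec_chain enc_chain mulmxA.
move=> H Bskp tBskp.
have Ha1 : alpha + 1 != 0 by rewrite gt_eqF // ltr_wpDl // ltW.
have HDE : forall l, (0 < l <= kappa)%N -> D l *m (E l)^T + tS l *m (S l)^T = 1%:M.
  move=> l Hl; have [HP Hpsi] := H l Hl.
  have K := @key R _ _ _ _ _ (Phi l) (tPhi l) (psi l) (tpsi l) _ _ (Hrl l Hl) HP Hpsi.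
  have H1 : (1%:M : 'M[R]_(m l.-1)) *m (1%:M)^T = 1%:M by rewrite trmx1 mulmx1.
  have K2 := @key R _ _ _ _ _ (1%:M : 'M[R]_(m l.-1)) (1%:M) (psi l) (tpsi l) _ _ (Hrl l Hl) H1 Hpsi.
  rewrite /D /E /S /tS /Dmx /Emx /Smx /tSmx K K2 scalar_mx_add; congr (_%:M); field.
  by rewrite Ha1 Hr0'.
have Hprod : tBskp *m Bskp^T = 1%:M.
  rewrite /tBskp /Bskp /skipmx tr_row_mx mul_row_col skip_prod.
  exact: skip_id.
split.
  move=> x; rewrite /Fskp decskp_eq enc_chain.
  rewrite /tBskp /Bskp /skipmx tr_row_mx mul_row_col skip_prod mulmxDl mulmx_suml mulmxA.
  reflexivity.
split; first exact: Hprod.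
by move=> x; rewrite sum_cols Hprod mul1mx.
Qed.
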